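(* Let $\varepsilon>0$, let $k:\mathbb{R}\to\mathbb{R}$ be $C^1$ with $k^{-1}(0)=\{0\}$ and $k'(0)>0$, and let $b_0,b_1,c:\mathbb{R}\to\mathbb{R}$ be $C^\infty$ with $b_1>0$, $b_1'<0$, $c>0$ and $c'(u)/c(u)>b_1'(u)/b_1(u)$ for all $u$. Put $b(u,a)=b_0(u)-ab_1(u)$, $h(u,a)=b(u,a)/c(u)$, and assume that for every $a\in\mathbb{R}$ the function $h(\cdot,a)$ has finitely many critical points, all isolated, and that $h(u,a)\to-\infty$ as $|u|\to\infty$ for every $a\ge 0$. Consider for each $a\in\mathbb{R}$ the reduced vector field $\widetilde f(\cdot,a)$ on $\mathbb{R}^2$, $$\widetilde f((u,n),a)=\Big(\varepsilon\big(\partial_u b(u,a)-c'(u)n\big),\ \tfrac{1}{\widetilde{k}(n)}\big(b(u,a)-c(u)n\big)\Big),$$ with $\widetilde{k}(n)=k(n)/n$ for $n\ne0$, $\widetilde k(0)=k'(0)$, and its flow $\widetilde{\phi}^a$. Let $\mathcal{P}=\{(x,a)\in\mathbb{R}^2\times\mathbb{R}\mid \widetilde f(x,a)=0\}=\{((u,n),a)\mid a=a_\star(u),\ n=h_\star(u)\}$, where $a_\star$ is the smooth function with $\partial_u h(u,a_\star(u))=0$ and $h_\star(u)=h(u,a_\star(u))$. Then $\mathcal{P}$ is partitioned into $$\mathcal{P}^{\mathrm{stab}}=\{(x,a)\in\mathcal P\mid a_\star'(u)>0\}\neq\emptyset,\quad \mathcal{P}^{\mathrm{unst}}=\{(x,a)\in\mathcal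 P\mid a_\star'(u)<0\},\quad \mathcal{P}^{\mathrm{bif}}=\{(x,a)\in\mathcal P\mid a_\star'(u)=0\},$$ where for $(x,a)\in\mathcal P^{\mathrm{stab}}$ the point $x$ is a stable node of $\widetilde{\phi}^{a}$, for $(x,a)\in\mathcal P^{\mathrm{unst}}$ it is a saddle of $\widetilde{\phi}^a$, and for $(x,a)\in\mathcal P^{\mathrm{bif}}$ it is an isolated nonhyperbolic equilibrium of $\widetilde\phi^a$. Moreover the subset $\{((u,n),a)\in\mathcal P^{\mathrm{bif}}\mid a_\star''(u)\neq0\}$ consists of generic fold (saddle-node) bifurcation points of the one-parameter family of flows $\widetilde{\phi}^{a}$.
   Context: Primes denote derivatives with respect to $u$. Explicitly, $a_\star(u)=\dfrac{b_0'(u)c(u)-b_0(u)c'(u)}{b_1'(u)c(u)-b_1(u)c'(u)}$, the denominator being nonzero by the assumption $c'/c>b_1'/b_1$. *)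

(* Defs.v *)
From Stdlib Require Import Reals List.
From Coquelicot Require Import Coquelicot.
Open Scope R_scope.

Definition is_C1 (f : R -> R) : Prop :=
  (forall x, ex_derive f x) /\ (forall x, continuous (Derive f) x).

Definition is_smooth (f : R -> R) : Prop :=
  forall (m : nat) (x : R), ex_derive (Derive_n f m) x.

Record mat2 := Mat2 { m11 : R; m12 : R; m21 : R; m22 : R }.

Definition mat2_apply (J : mat2) (h : R * R) : R * R :=
  (m11 J * fst h + m12 J * snd h, m21 J * fst h + m22 J * snd h).

Definition is_eigenvalue (J : mat2) (z : C) : Prop :=
  Cminus (Cmult (Cminus (RtoC (m11 J)) z) (Cminus (RtoC (m22 J)) z))
         (RtoC (m12 J * m21 J)) = RtoC 0.

Definition charpoly (J : mat2) (l : R) : R :=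
  (m11 J - l) * (m22 J - l) - m12 J * m21 J.

Definition has_jacobian (G : R * R -> R * R) (x : R * R) (J : mat2) : Prop :=
  filterdiff G (locally x) (mat2_apply J).

Definition equilibrium (G : R * R -> R * R) (x : R * R) : Prop := G x = (0, 0).

Definition stable_node (G : R * R -> R * R) (x : R * R) : Prop :=
  equilibrium G x /\
  exists J, has_jacobian G x J /\
    forall z : C, is_eigenvalue J z -> Im z = 0 /\ Re z < 0.

Definition saddle (G : R * R -> R * R) (x : R * R) : Prop :=
  equilibrium G x /\
  exists J, has_jacobian G x J /\
    exists l1 l2 : R, l1 < 0 < l2 /\
      is_eigenvalue J (RtoC l1) /\ is_eigenvalue J (RtoC l2).

Definition isolated_equilibrium (G : R * R -> R * R) (x : R * R) : Prop :=
  equilibrium G x /\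
  exists d, 0 < d /\ forall y : R * R,
    Rabs (fst y - fst x) < d -> Rabs (snd y - snd x) < d ->
    equilibrium G y -> y = x.

Definition nonhyperbolic_equilibrium (G : R * R -> R * R) (x : R * R) : Prop :=
  equilibrium G x /\
  exists J, has_jacobian G x J /\
    exists z : C, is_eigenvalue J z /\ Re z = 0.

(** * Generic fold (saddle-node) bifurcation point of a one-parameter family
      F(., a) of planar vector fields (Sotomayor / Kuznetsov conditions):
      - F(x0,a0) = 0;
      - the Jacobian J in x has 0 as a simple eigenvalue (spectrum {0, mu},
        mu <> 0), with right null vector v and left null vector w;
      - transversality: w . dF/da (x0,a0) <> 0;
      - nondegeneracy: w . D^2_x F(x0,a0)(v,v) <> 0, the latter being the
        second derivative of t |-> F(x0 + t v, a0) at t = 0. *)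
Definition generic_fold (F : R * R -> R -> R * R) (x0 : R * R) (a0 : R) : Prop :=
  F x0 a0 = (0, 0) /\
  exists J : mat2, has_jacobian (fun y => F y a0) x0 J /\
  (exists mu, mu <> 0 /\ forall l, charpoly J l = l * (l - mu)) /\
  exists (v w : R * R),
    v <> (0, 0) /\ w <> (0, 0) /\
    mat2_apply J v = (0, 0) /\
    (fst w * m11 J + snd w * m21 J = 0 /\ fst w * m12 J + snd w * m22 J = 0) /\
    (exists Fa : R * R, is_derive (fun a => F x0 a) a0 Fa /\
       fst w * fst Fa + snd w * snd Fa <> 0) /\
    (exists (D1 : R -> R * R) (D2 : R * R),
       locally 0 (fun t => is_derive
          (fun s => F (fst x0 + s * fst v, snd x0 + s * snd v) a0) t (D1 t)) /\
       is_derive D1 0 D2 /\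
       fst w * fst D2 + snd w * snd D2 <> 0).

Definition bfun (b0 b1 : R -> R) (u a : R) : R := b0 u - a * b1 u.
Definition hfun (b0 b1 c : R -> R) (u a : R) : R := bfun b0 b1 u a / c u.

Definition ktilde (k : R -> R) (n : R) : R :=
  if Req_EM_T n 0 then Derive k 0 else k n / n.

Definition ftilde (eps : R) (k b0 b1 c : R -> R) (x : R * R) (a : R) : R * R :=
  let u := fst x in let n := snd x in
  (eps * ((Derive b0 u - a * Derive b1 u) - Derive c u * n),
   / ktilde k n * (bfun b0 b1 u a - c u * n)).

Definition a_star (b0 b1 c : R -> R) (u : R) : R :=
  (Derive b0 u * c u - b0 u * Derive c u) /
  (Derive b1 u * c u - b1 u * Derive c u).

Definition h_star (b0 b1 c : R -> R) (u : R) : R :=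
  hfun b0 b1 c u (a_star b0 b1 c u).

(* Main.v *)
From Stdlib Require Import Reals List Lra Psatz FunctionalExtensionality.
From Coquelicot Require Import Coquelicot.
Require Import Defs.
Open Scope R_scope.

Definition Ck (m : nat) (f : R -> R) : Prop :=
  forall j, (j <= m)%nat -> forall x, ex_derive (Derive_n f j) x.

Lemma Derive_n_Sd f j x : Derive_n (Derive f) j x = Derive_n f (S j) x.
Proof.
  revert x; induction j; intro x; [reflexivity|].
  simpl. apply Derive_ext. intro t. rewrite IHj. reflexivity.
Qed.

Lemma Ck_S m f : Ck (S m) f <-> (forall x, ex_derive f x) /\ Ck m (Derive f).
Proof.
  split.
  - intro H. split.
    + intro x. apply (H 0%nat); lia.
    + intros j Hj x. apply ex_derive_ext with (f := Derive_n f (S j)).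
      { intro t. now rewrite Derive_n_Sd. }
      apply H; lia.
  - intros [H1 H2] j Hj x. destruct j as [|j].
    + apply H1.
    + apply ex_derive_ext with (f := Derive_n (Derive f) j).
      { intro t. now rewrite Derive_n_Sd. }
      apply H2; lia.
Qed.

Lemma Ck_0 f : Ck 0 f <-> forall x, ex_derive f x.
Proof.
  split.
  - intros H x. apply (H 0%nat); lia.
  - intros H j Hj x. assert (j = 0%nat) by lia. subst. apply H.
Qed.

Lemma Ck_mono m f : Ck (S m) f -> Ck m f.
Proof. intros H j Hj. apply H; lia. Qed.

Lemma Ck_ext m f g : (forall x, f x = g x) -> Ck m f -> Ck m g.
Proof.
  intros E H j Hj x. apply ex_derive_ext with (f := Derive_n f j).
  { intro t. now apply Derive_n_ext. }
  now apply H.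
Qed.

Lemma Ck_ex m f : Ck m f -> forall x, ex_derive f x.
Proof. intros H x. apply (H 0%nat); lia. Qed.

Lemma Ck_plus m : forall f g, Ck m f -> Ck m g -> Ck m (fun x => f x + g x).
Proof.
  induction m; intros f g Hf Hg.
  - apply Ck_0. intro x. apply (ex_derive_plus f g); now apply Ck_ex with 0%nat.
  - apply Ck_S in Hf as [Hf1 Hf2]. apply Ck_S in Hg as [Hg1 Hg2].
    apply Ck_S. split.
    + intro x. now apply (ex_derive_plus f g).
    + apply Ck_ext with (f := fun x => Derive f x + Derive g x).
      { intro x. now rewrite Derive_plus. }
      now apply IHm.
Qed.

Lemma Ck_const m : forall a, Ck m (fun _ => a).
Proof.
  induction m; intro a.
  - apply Ck_0. intro. apply ex_derive_const.
  - apply Ck_S. split. intro; apply ex_derive_const.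
    apply Ck_ext with (f := fun _ => 0). { intro. now rewrite Derive_const. }
    apply IHm.
Qed.

Lemma Ck_mult m : forall f g, Ck m f -> Ck m g -> Ck m (fun x => f x * g x).
Proof.
  induction m; intros f g Hf Hg.
  - apply Ck_0. intro x. apply ex_derive_mult; now apply Ck_ex with 0%nat.
  - pose proof (Ck_mono _ _ Hf) as Hf0. pose proof (Ck_mono _ _ Hg) as Hg0.
    apply Ck_S in Hf as [Hf1 Hf2]. apply Ck_S in Hg as [Hg1 Hg2].
    apply Ck_S. split.
    + intro x. now apply ex_derive_mult.
    + apply Ck_ext with (f := fun x => Derive f x * g x + f x * Derive g x).
      { intro x. now rewrite Derive_mult. }
      apply Ck_plus; apply IHm; auto.
Qed.

Lemma Ck_inv m : forall g, (forall x, g x <> 0) -> Ck m g -> Ck m (fun x => / g x).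
Proof.
  induction m; intros g Hn Hg.
  - apply Ck_0. intro x. apply ex_derive_inv; auto. now apply Ck_ex with 0%nat.
  - pose proof (Ck_mono _ _ Hg) as Hg0.
    apply Ck_S in Hg as [Hg1 Hg2].
    apply Ck_S. split.
    + intro x. now apply ex_derive_inv.
    + apply Ck_ext with (f := fun x => (-1) * Derive g x * (/ g x * / g x)).
      { intro x. rewrite Derive_inv; auto. field. auto. }
      apply Ck_mult; [apply Ck_mult|]; auto using Ck_const.
      apply Ck_mult; apply IHm; auto.
Qed.

Lemma smooth_Ck f : (forall (m : nat) (x : R), ex_derive (Derive_n f m) x) <-> forall m, Ck m f.
Proof.
  split.
  - intros H m j Hj x. apply H.
  - intros H m x. apply (H m m). lia.
Qed.
Lemma fd_fst (phi : R -> R) (x : R * R) d : is_derive phi (fst x) d ->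
  filterdiff (fun y : R * R => phi (fst y)) (locally x) (fun h => fst h * d).
Proof.
  intro H.
  apply filterdiff_ext_lin with (fun h : R*R => scal (fst h) d).
  2:{ intro; reflexivity. }
  apply (filterdiff_comp' (fun y : R*R => fst y) phi x (fun y => fst y) (fun y => scal y d)).
  - apply filterdiff_linear, is_linear_fst.
  - exact H.
Qed.
Lemma fd_snd (x : R * R) : 
  filterdiff (fun y : R * R => snd y) (locally x) (fun h => snd h).
Proof. apply filterdiff_linear, is_linear_snd. Qed.
Lemma fd_mult (f g : R * R -> R) x lf lg : filterdiff f (locally x) lf -> filterdiff g (locally x) lg ->
  filterdiff (fun y => f y * g y) (locally x) (fun h => lf h * g x + f x * lg h).
Proof.
  intros Hf Hg.
  apply (filterdiff_mult_fct f g x lf lg); auto. intros; apply Rmult_comm.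
Qed.
Lemma fd_minus (f g : R * R -> R) x lf lg : filterdiff f (locally x) lf -> filterdiff g (locally x) lg ->
  filterdiff (fun y => f y - g y) (locally x) (fun h => lf h - lg h).
Proof.
  intros Hf Hg.
  apply (filterdiff_minus_fct f g lf lg); auto.
Qed.
Lemma fd_scal (f : R * R -> R) x lf k : filterdiff f (locally x) lf ->
  filterdiff (fun y => k * f y) (locally x) (fun h => k * lf h).
Proof.
  intros Hf.
  apply (filterdiff_scal_r_fct k f lf); auto. intros; apply Rmult_comm.
Qed.
Lemma fd_pair (f g : R * R -> R) x lf lg : filterdiff f (locally x) lf -> filterdiff g (locally x) lg ->
  filterdiff (fun y => (f y, g y)) (locally x) (fun h => (lf h, lg h)).
Proof.
  intros Hf Hg.
  apply (filterdiff_comp'_2 f g (fun a b => (a,b)) x lf lg (fun a b => (a,b))); auto.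
  apply filterdiff_ext with (fun t => t). { intros [a b]; reflexivity. }
  apply filterdiff_ext_lin with (fun t => t). 2:{ intros [a b]; reflexivity. }
  apply filterdiff_linear, is_linear_id.
Qed.
Lemma fd_mult0 (g q : R * R -> R) x lq : continuous g x -> filterdiff q (locally x) lq -> q x = 0 ->
  filterdiff (fun y => g y * q y) (locally x) (fun h => g x * lq h).
Proof.
  intros Hg Hq Hq0.
  pose proof Hq as [Hl Hd].
  split.
  { destruct (filterdiff_scal_r_fct (g x) q lq (fun a b => Rmult_comm a b) Hq) as [L _]. exact L. }
  intros x' Hx'. pose proof (@is_filter_lim_locally_unique _ (prod_NormedModule R_AbsRing R_NormedModule R_NormedModule) x x' Hx') as Ex. subst x'.
  specialize (Hd x (fun P H => H)).
  destruct (linear_norm lq Hl) as [M [HM HMb]].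
  intro eps.
  set (gx := Rabs (g x)).
  assert (Hgx : 0 <= gx) by apply Rabs_pos.
  set (e1 := Rmin 1 (eps / (2 * (gx + 1)))).
  assert (He1 : 0 < e1). { unfold e1. apply Rmin_pos. lra. apply Rdiv_lt_0_compat. apply cond_pos. lra. }
  assert (He1a : e1 <= 1) by apply Rmin_l.
  assert (He1b : e1 * (gx + 1) <= eps / 2).
  { assert (e1 <= eps / (2 * (gx+1))) by apply Rmin_r.
    apply Rmult_le_compat_r with (r := gx + 1) in H; [|lra].
    replace (eps / (2 * (gx + 1)) * (gx + 1)) with (eps/2) in H by (field; lra). lra. }
  set (e2 := eps / (2 * (1 + M))).
  assert (He2 : 0 < e2). { unfold e2. apply Rdiv_lt_0_compat. apply cond_pos. lra. }
  assert (He2b : e2 * (1 + M) = eps / 2). { unfold e2. field. lra. }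
  pose proof (Hd (mkposreal e1 He1)) as D1.
  unfold continuous in Hg. rewrite filterlim_locally in Hg.
  pose proof (Hg (mkposreal e2 He2)) as D2.
  eapply filter_imp; [|apply filter_and; [exact D1|exact D2]].
  intros y [Y1 Y2]. simpl in Y1, Y2.
  assert (Hn : 0 <= norm (minus y x)) by apply norm_ge_0.
  assert (Y1' : Rabs (q y - q x - lq (minus y x)) <= e1 * norm (minus y x)) by exact Y1.
  assert (Hlh : Rabs (lq (minus y x)) <= M * norm (minus y x)) by apply HMb.
  assert (Y2' : Rabs (g y - g x) < e2) by exact Y2.
  change (Rabs (g y * q y - g x * q x - g x * lq (minus y x)) <= eps * norm (minus y x)).
  clear Y1 Y2 D1 D2 Hd HMb Hg Hq Hl.
  revert Hn Y1' Hlh. generalize (lq (minus y x)) (norm (minus y x)). intros L n Hn Y1 Hlh.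
  rewrite Hq0 in *.
  set (r := q y - 0 - L) in *.
  assert (Er : q y = r + L). { unfold r. ring. }
  assert (Et : g y * q y - g x * 0 - g x * L = g x * r + (g y - g x) * q y).
  { rewrite Er. ring. }
  rewrite Et.
  eapply Rle_trans. apply Rabs_triang.
  rewrite !Rabs_mult.
  assert (Hqy : Rabs (q y) <= e1 * n + M * n). { rewrite Er. eapply Rle_trans. apply Rabs_triang. lra. }
  assert (Hr0 : 0 <= Rabs r) by apply Rabs_pos.
  assert (Hd0 : 0 <= Rabs (g y - g x)) by apply Rabs_pos.
  fold gx.
  assert (gx * Rabs r <= gx * (e1 * n)) by (apply Rmult_le_compat_l; lra).
  assert (Rabs (g y - g x) * Rabs (q y) <= e2 * ((1 + M) * n)).
  { apply Rmult_le_compat; try lra. apply Rabs_pos. nra. }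
  nra.
Qed.
Lemma jac2 eps (be ga B C g : R -> R) (x0 : R * R) dbe dga dB dC :
  is_derive be (fst x0) dbe -> is_derive ga (fst x0) dga ->
  is_derive B (fst x0) dB -> is_derive C (fst x0) dC ->
  continuous g (snd x0) ->
  B (fst x0) - C (fst x0) * snd x0 = 0 ->
  has_jacobian (fun y => (eps * (be (fst y) - ga (fst y) * snd y),
                          g (snd y) * (B (fst y) - C (fst y) * snd y))) x0
    (Mat2 (eps * (dbe - dga * snd x0)) (- (eps * ga (fst x0)))
          (g (snd x0) * (dB - dC * snd x0)) (- (g (snd x0) * C (fst x0)))).
Proof.
  intros Hbe Hga HB HC Hg H0.
  unfold has_jacobian.
  eapply filterdiff_ext_lin.
  - apply fd_pair.
    + apply fd_scal. apply fd_minus. apply fd_fst, Hbe.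
      apply fd_mult. apply fd_fst, Hga. apply fd_snd.
    + apply (fd_mult0 (fun y => g (snd y)) (fun y => B (fst y) - C (fst y) * snd y)).
      * apply continuous_comp. apply continuous_snd. exact Hg.
      * apply fd_minus. apply fd_fst, HB. apply fd_mult. apply fd_fst, HC. apply fd_snd.
      * exact H0.
  - intros [h1 h2]. unfold mat2_apply; simpl. f_equal; ring.
Qed.

Lemma k_continuity (k : R -> R) : is_C1 k -> continuity k.
Proof.
  intros [Hk _] x. apply continuity_pt_filterlim. apply (ex_derive_continuous (K:=R_AbsRing) (V:=R_NormedModule)), Hk.
Qed.

Lemma k_dlim (k : R -> R) : is_C1 k -> forall eps, 0 < eps -> exists delta, 0 < delta /\
  forall h, h <> 0 -> Rabs h < delta -> Rabs ((k (0 + h) - k 0) / h - Derive k 0) < eps.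
Proof.
  intros [Hk _] eps He.
  pose proof (Derive_correct k 0 (Hk 0)) as D. apply is_derive_Reals in D.
  destruct (D eps He) as [d Hd]. exists d. split. apply cond_pos. intros; apply Hd; auto.
Qed.

Lemma kt_pos (k : R -> R) : is_C1 k -> (forall n, k n = 0 <-> n = 0) -> 0 < Derive k 0 ->
  forall n, 0 < ktilde k n.
Proof.
  intros Hk Hk0 Hk' n. unfold ktilde. destruct (Req_EM_T n 0) as [E|E]; [exact Hk'|].
  assert (k0 : k 0 = 0) by (apply Hk0; reflexivity).
  assert (Hc := k_continuity k Hk).
  destruct (k_dlim k Hk (Derive k 0 / 2)) as [d [Hd Hdl]]; [lra|].
  assert (Hpos : forall h, h <> 0 -> Rabs h < d -> 0 < k h / h).
  { intros h H1 H2. specialize (Hdl h H1 H2). rewrite Rplus_0_l, k0, Rminus_0_r in Hdl.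
    apply Rabs_def2 in Hdl. lra. }
  assert (knz : k n <> 0). { intro H. exact (E (proj1 (Hk0 n) H)). }
  destruct (Rlt_or_le 0 n) as [Hn|Hn].
  - assert (0 < k n).
    { destruct (Rlt_or_le 0 (k n)) as [H|H]; [exact H|exfalso].
      set (h := Rmin (n/2) (d/2)).
      assert (Hh0 : 0 < h) by (apply Rmin_pos; lra).
      assert (Hh1 : h < n) by (unfold h; pose proof (Rmin_l (n/2) (d/2)); lra).
      assert (Hh2 : h < d) by (unfold h; pose proof (Rmin_r (n/2) (d/2)); lra).
      assert (Hkh : 0 < k h / h) by (apply Hpos; [lra| rewrite Rabs_pos_eq; lra]).
      assert (0 < k h). { apply Rmult_lt_reg_r with (/ h). apply Rinv_0_lt_compat; lra.
        rewrite Rmult_0_l. exact Hkh. }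
      assert (kn' : k n < 0) by (destruct H; [exact H| congruence]).
      assert (Hcc : continuity (fun t => - k t)) by (intro t; apply continuity_pt_opp, Hc).
      destruct (IVT (fun t => - k t) h n Hcc Hh1 ltac:(lra) ltac:(lra)) as [z [Hz1 Hz2]].
      cbv beta in Hz2. assert (kz : k z = 0) by lra. apply (proj1 (Hk0 z)) in kz. lra. }
    apply Rdiv_lt_0_compat; lra.
  - assert (Hn' : n < 0) by lra.
    assert (k n < 0).
    { destruct (Rlt_or_le (k n) 0) as [H|H]; [exact H|exfalso].
      assert (H' : 0 < k n) by lra.
      set (h := - Rmin (-n/2) (d/2)).
      assert (Hh0 : h < 0) by (unfold h; assert (0 < Rmin (-n/2) (d/2)) by (apply Rmin_pos; lra); lra).
      assert (Hh1 : n < h) by (unfold h; pose proof (Rmin_l (-n/2) (d/2)); lra).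
      assert (Hh2 : -h < d) by (unfold h; pose proof (Rmin_r (-n/2) (d/2)); lra).
      assert (Hkh : 0 < k h / h) by (apply Hpos; [lra| rewrite Rabs_left; lra]).
      assert (k h < 0). { unfold Rdiv in Hkh.
        assert (/ h < 0) by (apply Rinv_lt_0_compat; lra). nra. }
      assert (Hcc : continuity (fun t => - k t)) by (intro t; apply continuity_pt_opp, Hc).
      destruct (IVT (fun t => - k t) n h Hcc Hh1 ltac:(lra) ltac:(lra)) as [z [Hz1 Hz2]].
      cbv beta in Hz2. assert (kz : k z = 0) by lra. apply (proj1 (Hk0 z)) in kz. lra. }
    unfold Rdiv. assert (/ n < 0) by (apply Rinv_lt_0_compat; lra). nra.
Qed.

Lemma kt_cont (k : R -> R) : is_C1 k -> (forall n, k n = 0 <-> n = 0) ->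
  forall n, continuous (ktilde k) n.
Proof.
  intros Hk Hk0 n0.
  assert (k0 : k 0 = 0) by (apply Hk0; reflexivity).
  destruct (Req_EM_T n0 0) as [E|E].
  - subst n0. apply continuity_pt_filterlim.
    intros eps He. destruct (k_dlim k Hk eps He) as [d [Hd Hdl]].
    exists d. split; [lra|]. intros x [[_ Hx] Hxd].
    simpl in *. unfold R_dist in *. rewrite Rminus_0_r in Hxd.
    unfold ktilde. destruct (Req_EM_T x 0) as [E|E]; [congruence|].
    destruct (Req_EM_T 0 0) as [_|E']; [|congruence].
    specialize (Hdl x E Hxd). rewrite Rplus_0_l, k0, Rminus_0_r in Hdl. exact Hdl.
  - apply continuous_ext_loc with (fun t => k t / t).
    + assert (Hr : 0 < Rabs n0) by (apply Rabs_pos_lt; auto).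
      exists (mkposreal _ Hr). intros y Hy. unfold ktilde.
      destruct (Req_EM_T y 0) as [E'|E']; [|reflexivity].
      exfalso. subst y. unfold ball in Hy; simpl in Hy. unfold AbsRing_ball, abs, minus, plus, opp in Hy; simpl in Hy.
      rewrite Rplus_0_l, Rabs_Ropp in Hy. lra.
    + apply (ex_derive_continuous (K:=R_AbsRing) (V:=R_NormedModule)). destruct Hk as [Hk _]. auto_derive. split; auto.
Qed.

Lemma ktinv_cont (k : R -> R) : is_C1 k -> (forall n, k n = 0 <-> n = 0) -> 0 < Derive k 0 ->
  forall n, continuous (fun n => / ktilde k n) n.
Proof.
  intros Hk Hk0 Hk' n. apply continuous_Rinv_comp. apply kt_cont; auto.
  pose proof (kt_pos k Hk Hk0 Hk' n). lra.
Qed.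

Ltac etaD := repeat match goal with
 | |- context [fun x : R => ?f x] => change (fun x : R => f x) with f end.

Lemma is_derive_pair (f g : R -> R) x l1 l2 : is_derive f x l1 -> is_derive g x l2 ->
  is_derive (fun t => (f t, g t)) x (l1, l2).
Proof.
  intros H1 H2. unfold is_derive.
  apply filterdiff_ext_lin with (fun y : R => (scal y l1, scal y l2)).
  2:{ intro; reflexivity. }
  apply (filterdiff_comp'_2 f g (fun a b => (a,b)) x _ _ (fun a b => (a,b))); auto.
  apply filterdiff_ext with (fun t => t). { intros [a b]; reflexivity. }
  apply filterdiff_ext_lin with (fun t => t). 2:{ intros [a b]; reflexivity. }
  apply filterdiff_linear, is_linear_id.
Qed.

Lemma sm0 f : is_smooth f -> forall x, ex_derive f x.
Proof. intros H x. exact (H 0%nat x). Qed.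
Lemma sm1 f : is_smooth f -> forall x, ex_derive (Derive f) x.
Proof. intros H x. exact (H 1%nat x). Qed.
Lemma sm2 f : is_smooth f -> forall x, ex_derive (Derive (Derive f)) x.
Proof. intros H x. exact (H 2%nat x). Qed.

Definition Dd (b1 c : R -> R) u := Derive b1 u * c u - b1 u * Derive c u.

Lemma Dd_neg b1 c : (forall u, 0 < b1 u) -> (forall u, 0 < c u) ->
  (forall u, Derive c u / c u > Derive b1 u / b1 u) -> forall u, Dd b1 c u < 0.
Proof.
  intros Hb Hc Hcb u. specialize (Hcb u). specialize (Hb u). specialize (Hc u).
  unfold Dd.
  assert (E : Derive b1 u * c u - b1 u * Derive c u =
     - (c u * b1 u) * (Derive c u / c u - Derive b1 u / b1 u)) by (field; lra).
  rewrite E. assert (0 < c u * b1 u) by nra. nra.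
Qed.

Lemma ast_eq b0 b1 c u : Dd b1 c u <> 0 ->
  a_star b0 b1 c u * Dd b1 c u = Derive b0 u * c u - b0 u * Derive c u.
Proof. intro H. unfold a_star. fold (Dd b1 c u). field. exact H. Qed.

Lemma E1 b0 b1 c u : Dd b1 c u <> 0 -> c u <> 0 ->
  Derive b0 u - a_star b0 b1 c u * Derive b1 u - Derive c u * h_star b0 b1 c u = 0.
Proof.
  intros H Hc. pose proof (ast_eq b0 b1 c u H) as E. unfold Dd in E.
  unfold h_star, hfun, bfun.
  apply Rmult_eq_reg_r with (c u); auto. rewrite Rmult_0_l.
  replace ((Derive b0 u - a_star b0 b1 c u * Derive b1 u -
     Derive c u * ((b0 u - a_star b0 b1 c u * b1 u) / c u)) * c u) with
   (Derive b0 u * c u - b0 u * Derive c u - a_star b0 b1 c u * (Derive b1 u * c u - b1 u * Derive c u)) by (field; auto).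
  rewrite E. ring.
Qed.

Lemma E2 b0 b1 c u a : c u <> 0 -> bfun b0 b1 u a - c u * hfun b0 b1 c u a = 0.
Proof. intro Hc. unfold hfun. field. auto. Qed.

Lemma E3 b0 b1 c : is_smooth b0 -> is_smooth b1 -> is_smooth c -> (forall u, 0 < c u) ->
  (forall u, Dd b1 c u <> 0) ->
  forall u, Derive (fun v => hfun b0 b1 c v (a_star b0 b1 c u)) u = 0.
Proof.
  intros Hb0 Hb1 Hc Hcpos HD u.
  assert (cu : c u <> 0) by (specialize (Hcpos u); lra).
  apply is_derive_unique. unfold hfun, bfun.
  auto_derive.
  - repeat split; auto using sm0.
  - etaD.
    transitivity ((Derive b0 u - a_star b0 b1 c u * Derive b1 u - Derive c u * h_star b0 b1 c u) / c u).
    + unfold h_star, hfun, bfun. field. auto.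
    + rewrite E1; auto. unfold Rdiv; ring.
Qed.

Lemma P_desc eps k b0 b1 c : 0 < eps -> (forall n, 0 < ktilde k n) -> (forall u, 0 < c u) ->
  (forall u, Dd b1 c u <> 0) ->
  forall u n a, ftilde eps k b0 b1 c (u, n) a = (0, 0) <-> (a = a_star b0 b1 c u /\ n = h_star b0 b1 c u).
Proof.
  intros Heps Hkt Hcpos HD u n a.
  assert (cu : c u <> 0) by (specialize (Hcpos u); lra).
  assert (ktn : / ktilde k n <> 0) by (apply Rinv_neq_0_compat; specialize (Hkt n); lra).
  specialize (HD u).
  unfold ftilde; simpl. split.
  - intro H. injection H as H1 H2.
    apply Rmult_integral in H1. destruct H1 as [H1|H1]; [lra|].
    apply Rmult_integral in H2. destruct H2 as [H2|H2]; [contradiction|].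
    unfold bfun in H2.
    assert (En : n = (b0 u - a * b1 u) / c u) by (field_simplify_eq; auto; lra).
    assert (H3 : (Derive b0 u - a * Derive b1 u - Derive c u * n) * c u = 0) by (rewrite H1; ring).
    rewrite En in H3.
    assert (H4 : Derive b0 u * c u - b0 u * Derive c u - a * Dd b1 c u = 0) by (unfold Dd; rewrite <- H3; field; auto).
    assert (Ea : a = a_star b0 b1 c u).
    { apply Rmult_eq_reg_r with (Dd b1 c u); auto. rewrite ast_eq; auto. lra. }
    split; auto. subst a. rewrite En. reflexivity.
  - intros [Ea En]. subst a n. f_equal.
    + rewrite E1; auto. ring.
    + rewrite E2; auto. ring.
Qed.

Definition Af b0 b1 c u := Derive (Derive b0) u - a_star b0 b1 c u * Derive (Derive b1) u
   - Derive (Derive c) u * h_star b0 b1 c u.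

Lemma ast_is_derive b0 b1 c : is_smooth b0 -> is_smooth b1 -> is_smooth c ->
  (forall u, Dd b1 c u <> 0) -> forall u,
  is_derive (a_star b0 b1 c) u
   (((Derive (Derive b0) u * c u - b0 u * Derive (Derive c) u)
     - a_star b0 b1 c u * (Derive (Derive b1) u * c u - b1 u * Derive (Derive c) u)) / Dd b1 c u).
Proof.
  intros Hb0 Hb1 Hc HD u. specialize (HD u). unfold Dd in *. unfold a_star.
  auto_derive.
  - repeat split; auto using sm0, sm1.
  - etaD. field. exact HD.
Qed.

Lemma E4 b0 b1 c : is_smooth b0 -> is_smooth b1 -> is_smooth c -> (forall u, 0 < c u) ->
  (forall u, Dd b1 c u <> 0) -> forall u,
  Derive (a_star b0 b1 c) u * Dd b1 c u = c u * Af b0 b1 c u.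
Proof.
  intros Hb0 Hb1 Hc Hcpos HD u.
  rewrite (is_derive_unique _ _ _ (ast_is_derive b0 b1 c Hb0 Hb1 Hc HD u)).
  assert (cu : c u <> 0) by (specialize (Hcpos u); lra).
  specialize (HD u).
  unfold Af, h_star, hfun, bfun. field. split; auto.
Qed.

Lemma has_jac_eq G x J J' : has_jacobian G x J -> J = J' -> has_jacobian G x J'.
Proof. intros H E; subst; exact H. Qed.

Lemma jac_eq eps k b0 b1 c : is_C1 k -> (forall n, k n = 0 <-> n = 0) -> 0 < Derive k 0 ->
  is_smooth b0 -> is_smooth b1 -> is_smooth c -> (forall u, 0 < c u) ->
  (forall u, Dd b1 c u <> 0) -> forall u,
  has_jacobian (fun y => ftilde eps k b0 b1 c y (a_star b0 b1 c u)) (u, h_star b0 b1 c u)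
   (Mat2 (eps * (Derive (a_star b0 b1 c) u * Dd b1 c u / c u)) (-(eps * Derive c u)) 0
         (-(/ ktilde k (h_star b0 b1 c u) * c u))).
Proof.
  intros Hk Hk0 Hk' Hb0 Hb1 Hc Hcpos HD u.
  set (a := a_star b0 b1 c u). set (n0 := h_star b0 b1 c u).
  assert (cu : c u <> 0) by (specialize (Hcpos u); lra).
  assert (H1 : is_derive (fun u => Derive b0 u - a * Derive b1 u) u
                 (Derive (Derive b0) u - a * Derive (Derive b1) u)).
  { auto_derive. repeat split; auto using sm1. etaD. ring. }
  assert (H2 : is_derive (Derive c) u (Derive (Derive c) u)) by (apply Derive_correct, sm1, Hc).
  assert (H3 : is_derive (fun u => bfun b0 b1 u a) u (Derive b0 u - a * Derive b1 u)).
  { unfold bfun. auto_derive. repeat split; auto using sm0. etaD. ring. }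
  assert (H4 : is_derive c u (Derive c u)) by (apply Derive_correct, sm0, Hc).
  assert (Hg := ktinv_cont k Hk Hk0 Hk' n0).
  assert (H0 : bfun b0 b1 u a - c u * n0 = 0) by (apply E2; auto).
  pose proof (jac2 eps (fun u => Derive b0 u - a * Derive b1 u) (Derive c) (fun u => bfun b0 b1 u a) c
     (fun n => / ktilde k n) (u, n0) _ _ _ _ H1 H2 H3 H4 Hg H0) as J.
  eapply has_jac_eq; [exact J|]. simpl.
  f_equal. all: try ring.
  - pose proof (E4 b0 b1 c Hb0 Hb1 Hc Hcpos HD u) as E. fold a n0 in E.
    unfold Rdiv. rewrite E. unfold Af. fold a n0. field. auto.
  - pose proof (E1 b0 b1 c u (HD u) cu) as E. fold a n0 in E.
    replace (Derive b0 u - a * Derive b1 u - Derive c u * n0) with 0 by (rewrite <- E; ring). ring.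
Qed.
Lemma eig_tri p q s z : is_eigenvalue (Mat2 p q 0 s) z -> Im z = 0 /\ (Re z = p \/ Re z = s).
Proof.
  destruct z as [x y]. unfold is_eigenvalue, Cminus, Cmult, Cplus, Copp, RtoC, Re, Im; simpl.
  intro H. injection H as H1 H2.
  assert (Hy : y = 0).
  { destruct (Req_dec y 0) as [E|E]; auto.
    assert (x = (p + s)/2).
    { assert (y * ((p - x) + (s - x)) = 0) by nra.
      apply Rmult_integral in H. destruct H; [contradiction|lra]. }
    subst x. exfalso. assert (0 < y * y) by (pose proof (Rsqr_pos_lt y E); unfold Rsqr in *; lra).
    match type of H1 with ?L = 0 => assert (Ey : y * y + ((p - s) / 2) * ((p - s) / 2) = - L) by field end. rewrite H1 in Ey.
    pose proof (Rle_0_sqr ((p - s) / 2)). unfold Rsqr in *. lra. }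
  subst y. split; auto.
  assert ((p - x) * (s - x) = 0) by nra.
  apply Rmult_integral in H. lra.
Qed.
Lemma eig_tri_p p q s : is_eigenvalue (Mat2 p q 0 s) (RtoC p).
Proof.
  unfold is_eigenvalue, Cminus, Cmult, Cplus, Copp, RtoC; simpl. f_equal; ring.
Qed.
Lemma eig_tri_s p q s : is_eigenvalue (Mat2 p q 0 s) (RtoC s).
Proof.
  unfold is_eigenvalue, Cminus, Cmult, Cplus, Copp, RtoC; simpl. f_equal; ring.
Qed.

Lemma list_isolated (l : list R) x : exists d, 0 < d /\ forall y, In y l -> y <> x -> d <= Rabs (y - x).
Proof.
  induction l as [|a l IH].
  - exists 1. split; [lra|]. intros y [].
  - destruct IH as [d [Hd H]].
    destruct (Req_dec a x) as [E|E].
    + exists d. split; auto. intros y [Hy|Hy] Hyx; [subst; congruence|auto].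
    + exists (Rmin d (Rabs (a - x))). split.
      * apply Rmin_pos; auto. apply Rabs_pos_lt. lra.
      * intros y [Hy|Hy] Hyx.
        -- subst. apply Rmin_r.
        -- eapply Rle_trans. apply Rmin_l. auto.
Qed.

Lemma cont_of_ex (f : R -> R) x : ex_derive f x -> continuity_pt f x.
Proof. intro H. apply continuity_pt_filterlim. apply (ex_derive_continuous (K:=R_AbsRing) (V:=R_NormedModule)), H. Qed.

Lemma stab_ex b0 b1 c : is_smooth b0 -> is_smooth b1 -> is_smooth c -> (forall u, 0 < c u) ->
  (forall u, Dd b1 c u < 0) ->
  is_lim (fun u => hfun b0 b1 c u 0) p_infty m_infty ->
  is_lim (fun u => hfun b0 b1 c u 0) m_infty m_infty ->
  exists u, Derive (a_star b0 b1 c) u > 0.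
Proof.
  intros Hb0 Hb1 Hc Hcpos HDn Hp Hm.
  assert (HD : forall u, Dd b1 c u <> 0) by (intro u; specialize (HDn u); lra).
  set (h0 := fun u => hfun b0 b1 c u 0).
  set (V := fun x => (Derive b0 x * c x - b0 x * Derive c x) / (c x * c x)).
  assert (Hh0 : forall x, is_derive h0 x (V x)).
  { intro x. assert (cx : c x <> 0) by (specialize (Hcpos x); lra).
    unfold h0, V, hfun, bfun. auto_derive. repeat split; auto using sm0. etaD. field. auto. }
  assert (Hh0c : forall x, continuity_pt h0 x) by (intro x; apply cont_of_ex; eexists; apply Hh0).
  assert (Vsign : forall x, (V x < 0 -> a_star b0 b1 c x > 0) /\ (V x > 0 -> a_star b0 b1 c x < 0)).
  { intro x. pose proof (Hcpos x). pose proof (HDn x).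
    assert (EV : V x = a_star b0 b1 c x * Dd b1 c x / (c x * c x)).
    { rewrite ast_eq; auto. }
    assert (0 < c x * c x) by nra.
    split; intro H'; rewrite EV in H'; unfold Rdiv in H';
      assert (0 < / (c x * c x)) by (apply Rinv_0_lt_compat; lra).
    - destruct (Rlt_or_le 0 (a_star b0 b1 c x)) as [|Ha]; auto. exfalso.
      assert (0 <= a_star b0 b1 c x * Dd b1 c x) by nra. nra.
    - destruct (Rlt_or_le (a_star b0 b1 c x) 0) as [|Ha]; auto. exfalso.
      assert (a_star b0 b1 c x * Dd b1 c x <= 0) by nra. nra. }
  apply is_lim_spec in Hp. apply is_lim_spec in Hm.
  destruct (Hp (h0 0)) as [M HM]. destruct (Hm (h0 0)) as [M' HM'].
  set (U := Rmax M 0 + 1).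
  assert (HU0 : 0 < U) by (unfold U; pose proof (Rmax_r M 0); lra).
  assert (HU : h0 U < h0 0) by (apply HM; unfold U; pose proof (Rmax_l M 0); lra).
  set (L := Rmin M' 0 - 1).
  assert (HL0 : L < 0) by (unfold L; pose proof (Rmin_r M' 0); lra).
  assert (HL : h0 L < h0 0) by (apply HM'; unfold L; pose proof (Rmin_l M' 0); lra).
  destruct (MVT_gen h0 0 U V) as [x1 [Hx1 E1']].
  { intros; apply Hh0. } { intros; apply Hh0c. }
  destruct (MVT_gen h0 L 0 V) as [x2 [Hx2 E2']].
  { intros; apply Hh0. } { intros; apply Hh0c. }
  rewrite Rmin_left, Rmax_right in Hx1 by lra.
  rewrite Rmin_left, Rmax_right in Hx2 by lra.
  assert (V1 : V x1 < 0). { assert (V x1 * U < 0) by (rewrite Rminus_0_r in E1'; lra). nra. }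
  assert (V2 : V x2 > 0). { assert (V x2 * (0 - L) > 0) by lra. nra. }
  apply Vsign in V1. apply Vsign in V2.
  assert (Hx12 : x2 < x1).
  { destruct (Req_dec x1 x2) as [E|E]. subst. lra. lra. }
  assert (Had : forall x, ex_derive (a_star b0 b1 c) x) by (intro x; eexists; apply ast_is_derive; auto).
  destruct (MVT_gen (a_star b0 b1 c) x2 x1 (Derive (a_star b0 b1 c))) as [z [Hz Ez]].
  { intros; apply Derive_correct, Had. } { intros; apply cont_of_ex, Had. }
  exists z. assert (Derive (a_star b0 b1 c) z * (x1 - x2) > 0) by lra. nra.
Qed.

Lemma Ck_minus m f g : Ck m f -> Ck m g -> Ck m (fun x => f x - g x).
Proof.
  intros Hf Hg. apply Ck_ext with (fun x => f x + (-1) * g x). { intro; ring. }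
  apply Ck_plus; auto. apply Ck_mult; auto using Ck_const.
Qed.

Lemma Ck_sm f m : is_smooth f -> Ck m f.
Proof. intro H. apply (proj1 (smooth_Ck f)); exact H. Qed.

Lemma Ck_smD f m : is_smooth f -> Ck m (Derive f).
Proof. intro H. apply (Ck_S m f). apply Ck_sm, H. Qed.

Lemma ast_smooth b0 b1 c : is_smooth b0 -> is_smooth b1 -> is_smooth c ->
  (forall u, Dd b1 c u <> 0) -> is_smooth (a_star b0 b1 c).
Proof.
  intros Hb0 Hb1 Hc HD. unfold is_smooth. apply (proj2 (smooth_Ck _)). intro m.
  apply Ck_ext with (fun u => (Derive b0 u * c u - b0 u * Derive c u) * / (Derive b1 u * c u - b1 u * Derive c u)).
  { intro; reflexivity. }
  apply Ck_mult.
  - apply Ck_minus; apply Ck_mult; auto using Ck_sm, Ck_smD.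
  - apply Ck_inv. exact HD.
    apply Ck_minus; apply Ck_mult; auto using Ck_sm, Ck_smD.
Qed.

Lemma sm3 f : is_smooth f -> forall x, ex_derive (Derive (Derive (Derive f))) x.
Proof. intros H x. exact (H 3%nat x). Qed.

Lemma fold_key b0 b1 c : is_smooth b0 -> is_smooth b1 -> is_smooth c -> (forall u, 0 < c u) ->
  (forall u, Dd b1 c u <> 0) -> forall u0, Derive (a_star b0 b1 c) u0 = 0 ->
  Derive (Derive (Derive b0)) u0 - a_star b0 b1 c u0 * Derive (Derive (Derive b1)) u0
   - Derive (Derive (Derive c)) u0 * h_star b0 b1 c u0
  = Derive (Derive (a_star b0 b1 c)) u0 * Dd b1 c u0 / c u0.
Proof.
  intros Hb0 Hb1 Hc Hcpos HD u0 H0.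
  assert (cu : c u0 <> 0) by (specialize (Hcpos u0); lra).
  assert (Has := ast_smooth b0 b1 c Hb0 Hb1 Hc HD).
  set (ast := a_star b0 b1 c) in *. set (hst := h_star b0 b1 c).
  assert (Has0 : forall x, ex_derive ast x) by (apply sm0, Has).
  assert (Has1 : forall x, ex_derive (Derive ast) x) by (apply sm1, Has).
  assert (Hhst : is_derive hst u0
     (((Derive b0 u0 - (Derive ast u0 * b1 u0 + ast u0 * Derive b1 u0)) * c u0
        - (b0 u0 - ast u0 * b1 u0) * Derive c u0) / (c u0 * c u0))).
  { unfold hst, h_star, hfun, bfun. fold ast. auto_derive.
    - repeat split; auto using sm0.
    - etaD. field. auto. }
  assert (Hh0 : Derive hst u0 = 0).
  { rewrite (is_derive_unique _ _ _ Hhst). rewrite H0.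
    pose proof (ast_eq b0 b1 c u0 (HD u0)) as E. fold ast in E. unfold Dd in E.
    assert (Num : (Derive b0 u0 - (0 * b1 u0 + ast u0 * Derive b1 u0)) * c u0 - (b0 u0 - ast u0 * b1 u0) * Derive c u0 = 0).
    { replace ((Derive b0 u0 - (0 * b1 u0 + ast u0 * Derive b1 u0)) * c u0 - (b0 u0 - ast u0 * b1 u0) * Derive c u0)
      with (Derive b0 u0 * c u0 - b0 u0 * Derive c u0 - ast u0 * (Derive b1 u0 * c u0 - b1 u0 * Derive c u0)) by ring.
      rewrite <- E. ring. }
    rewrite Num. unfold Rdiv. ring. }
  assert (HA0 : Af b0 b1 c u0 = 0).
  { pose proof (E4 b0 b1 c Hb0 Hb1 Hc Hcpos HD u0) as E. fold ast in E. rewrite H0, Rmult_0_l in E.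
    symmetry in E. apply Rmult_integral in E. destruct E; [contradiction|auto]. }
  assert (L : is_derive (fun u => Derive ast u * Dd b1 c u) u0
     (Derive (Derive ast) u0 * Dd b1 c u0 + Derive ast u0 *
       (Derive (Derive b1) u0 * c u0 - b1 u0 * Derive (Derive c) u0))).
  { unfold Dd. auto_derive.
    - repeat split; auto using sm0, sm1.
    - etaD. ring. }
  assert (Rr : is_derive (fun u => c u * Af b0 b1 c u) u0
     (Derive c u0 * Af b0 b1 c u0 + c u0 *
       (Derive (Derive (Derive b0)) u0 - (Derive ast u0 * Derive (Derive b1) u0 + ast u0 * Derive (Derive (Derive b1)) u0)
        - (Derive (Derive (Derive c)) u0 * hst u0 + Derive (Derive c) u0 * Derive hst u0)))).
  { unfold Af. fold ast hst. auto_derive.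
    - assert (ex_derive hst u0) by (eexists; exact Hhst). repeat split; auto using sm0, sm2.
    - etaD. ring. }
  assert (Rr' : is_derive (fun u => Derive ast u * Dd b1 c u) u0
     (Derive c u0 * Af b0 b1 c u0 + c u0 *
       (Derive (Derive (Derive b0)) u0 - (Derive ast u0 * Derive (Derive b1) u0 + ast u0 * Derive (Derive (Derive b1)) u0)
        - (Derive (Derive (Derive c)) u0 * hst u0 + Derive (Derive c) u0 * Derive hst u0)))).
  { eapply is_derive_ext; [|exact Rr]. intro t. simpl. symmetry. apply E4; auto. }
  pose proof (is_derive_unique _ _ _ L) as EL. pose proof (is_derive_unique _ _ _ Rr') as ER.
  rewrite EL in ER. rewrite H0, Hh0, HA0 in ER.
  apply Rmult_eq_reg_r with (c u0); auto.
  unfold Rdiv. rewrite Rmult_assoc, Rinv_l, Rmult_1_r by auto.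
  transitivity (Derive (Derive ast) u0 * Dd b1 c u0 + 0 * (Derive (Derive b1) u0 * c u0 - b1 u0 * Derive (Derive c) u0)).
  - rewrite ER. ring.
  - ring.
Qed.

Lemma fold_lemma eps k b0 b1 c : 0 < eps -> is_C1 k -> (forall n, k n = 0 <-> n = 0) -> 0 < Derive k 0 ->
  is_smooth b0 -> is_smooth b1 -> is_smooth c -> (forall u, 0 < c u) ->
  (forall u, Dd b1 c u <> 0) -> forall u,
  Derive (a_star b0 b1 c) u = 0 -> Derive (Derive (a_star b0 b1 c)) u <> 0 ->
  generic_fold (ftilde eps k b0 b1 c) (u, h_star b0 b1 c u) (a_star b0 b1 c u).
Proof.
  intros Heps Hk Hk0 Hk' Hb0 Hb1 Hc Hcpos HD u H0 H2.
  assert (cu : 0 < c u) by apply Hcpos.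
  assert (Hkt := kt_pos k Hk Hk0 Hk').
  pose proof (fold_key b0 b1 c Hb0 Hb1 Hc Hcpos HD u H0) as FK.
  assert (HA0 : Af b0 b1 c u = 0).
  { pose proof (E4 b0 b1 c Hb0 Hb1 Hc Hcpos HD u) as E. rewrite H0, Rmult_0_l in E.
    symmetry in E. apply Rmult_integral in E. destruct E; [lra|auto]. }
  pose proof (jac_eq eps k b0 b1 c Hk Hk0 Hk' Hb0 Hb1 Hc Hcpos HD u) as HJ.
  unfold Af in HA0.
  set (a0 := a_star b0 b1 c u) in *. set (n0 := h_star b0 b1 c u) in *.
  set (kt := ktilde k n0) in *.
  assert (kt0 : 0 < kt) by apply Hkt.
  assert (ikt : 0 < / kt) by (apply Rinv_0_lt_compat; auto).
  set (s := - (/ kt * c u)) in *.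
  assert (s0 : s < 0) by (unfold s; nra).
  assert (HDu := HD u).
  split.
  { apply (P_desc eps k b0 b1 c Heps Hkt Hcpos HD). split; reflexivity. }
  eexists. split. exact HJ.
  split.
  { exists s. split; [lra|]. intro l. unfold charpoly; simpl. rewrite H0. unfold Rdiv. ring. }
  exists (1, 0), (s, eps * Derive c u).
  split. { intro H. injection H as H. lra. }
  split. { intro H. injection H as H. lra. }
  split. { unfold mat2_apply; simpl. rewrite H0. f_equal; unfold Rdiv; ring. }
  split. { simpl. rewrite H0. unfold s. split; unfold Rdiv; ring. }
  split.
  { exists (eps * (- Derive b1 u), / kt * (- b1 u)). split.
    - eapply is_derive_ext with (f := fun a => (eps * (Derive b0 u - a * Derive b1 u - Derive c u * n0),
                                            / kt * (b0 u - a * b1 u - c u * n0))).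
      { intro t. reflexivity. }
      apply is_derive_pair; auto_derive; auto; ring.
    - simpl. unfold s.
      replace (- (/ kt * c u) * (eps * - Derive b1 u) + eps * Derive c u * (/ kt * - b1 u))
        with (eps * / kt * Dd b1 c u) by (unfold Dd; ring).
      apply Rmult_integral_contrapositive. split; auto. apply Rmult_integral_contrapositive. split; lra. }
  exists (fun t => (eps * (Derive (Derive b0) (u + t) - a0 * Derive (Derive b1) (u + t) - Derive (Derive c) (u + t) * n0),
                 / kt * (Derive b0 (u + t) - a0 * Derive b1 (u + t) - Derive c (u + t) * n0))).
  exists (eps * (Derive (Derive (Derive b0)) u - a0 * Derive (Derive (Derive b1)) u - Derive (Derive (Derive c)) u * n0),
          / kt * (Derive (Derive b0) u - a0 * Derive (Derive b1) u - Derive (Derive c) u * n0)).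
  split.
  { apply filter_forall. intro t.
    eapply is_derive_ext with (f := fun s => (eps * (Derive b0 (u+s) - a0 * Derive b1 (u+s) - Derive c (u+s) * n0),
                                           / kt * (b0 (u+s) - a0 * b1 (u+s) - c (u+s) * n0))).
    { intro s'. simpl. unfold ftilde, bfun; simpl. rewrite Rmult_1_r, Rmult_0_r, Rplus_0_r. reflexivity. }
    apply is_derive_pair; auto_derive; repeat split; auto using sm0, sm1; etaD; ring. }
  split.
  { apply is_derive_pair; auto_derive; repeat split; auto using sm1, sm2; etaD; rewrite ?Rplus_0_r; ring. }
  simpl. rewrite HA0. rewrite FK.
  replace (s * (eps * (Derive (Derive (a_star b0 b1 c)) u * Dd b1 c u / c u)) + eps * Derive c u * (/ kt * 0))
    with (s * eps * Derive (Derive (a_star b0 b1 c)) u * Dd b1 c u * / c u) by (unfold Rdiv; ring).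
  assert (cinv : / c u <> 0) by (apply Rinv_neq_0_compat; lra).
  intro Hz.
  repeat match goal with H : _ * _ = 0 |- _ => apply Rmult_integral in H; destruct H end;
    try lra; try contradiction.
Qed.
Theorem lemma2 (eps : R) (k b0 b1 c : R -> R)
  (Heps : 0 < eps)
  (Hk : is_C1 k) (Hk0 : forall n, k n = 0 <-> n = 0) (Hk'0 : 0 < Derive k 0)
  (Hb0 : is_smooth b0) (Hb1 : is_smooth b1) (Hc : is_smooth c)
  (Hb1pos : forall u, 0 < b1 u) (Hb1' : forall u, Derive b1 u < 0)
  (Hcpos : forall u, 0 < c u)
  (Hcb : forall u, Derive c u / c u > Derive b1 u / b1 u)
  (Hcrit : forall a, exists l : list R, forall u,
       Derive (fun v => hfun b0 b1 c v a) u = 0 -> In u l)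
  (Hinf : forall a, 0 <= a ->
       is_lim (fun u => hfun b0 b1 c u a) p_infty m_infty /\
       is_lim (fun u => hfun b0 b1 c u a) m_infty m_infty) :
  let F := ftilde eps k b0 b1 c in
  let ast := a_star b0 b1 c in
  let hst := h_star b0 b1 c in
  (* a_star is the smooth function with  d/du h(u, a_star u) = 0 *)
  is_smooth ast /\
  (forall u, Derive (fun v => hfun b0 b1 c v (ast u)) u = 0) /\
  (* description of P *)
  (forall u n a, F (u, n) a = (0, 0) <-> (a = ast u /\ n = hst u)) /\
  (* P^stab is nonempty *)
  (exists u, Derive ast u > 0) /\
  (* classification *)
  (forall u, Derive ast u > 0 -> stable_node (fun y => F y (ast u)) (u, hst u)) /\
  (forall u, Derive ast u < 0 -> saddle (fun y => F y (ast u)) (u, hst u)) /\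
  (forall u, Derive ast u = 0 ->
      isolated_equilibrium (fun y => F y (ast u)) (u, hst u) /\
      nonhyperbolic_equilibrium (fun y => F y (ast u)) (u, hst u)) /\
  (* generic folds *)
  (forall u, Derive ast u = 0 -> Derive_n ast 2 u <> 0 ->
      generic_fold F (u, hst u) (ast u)).
Proof.
  intros F ast hst. subst F ast hst.
  assert (HDn := Dd_neg b1 c Hb1pos Hcpos Hcb).
  assert (HD : forall u, Dd b1 c u <> 0) by (intro u; specialize (HDn u); lra).
  assert (Hkt := kt_pos k Hk Hk0 Hk'0).
  assert (Hm11 : forall u, Derive (a_star b0 b1 c) u > 0 ->
            eps * (Derive (a_star b0 b1 c) u * Dd b1 c u / c u) < 0).
  { intros u Hu. specialize (HDn u). assert (0 < / c u) by (apply Rinv_0_lt_compat; auto).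
    unfold Rdiv. assert (Derive (a_star b0 b1 c) u * Dd b1 c u < 0) by nra.
    assert (Derive (a_star b0 b1 c) u * Dd b1 c u * / c u < 0) by nra. nra. }
  assert (Hm11' : forall u, Derive (a_star b0 b1 c) u < 0 ->
            eps * (Derive (a_star b0 b1 c) u * Dd b1 c u / c u) > 0).
  { intros u Hu. specialize (HDn u). assert (0 < / c u) by (apply Rinv_0_lt_compat; auto).
    unfold Rdiv. assert (Derive (a_star b0 b1 c) u * Dd b1 c u > 0) by nra.
    assert (Derive (a_star b0 b1 c) u * Dd b1 c u * / c u > 0) by nra. nra. }
  assert (Hm22 : forall u, - (/ ktilde k (h_star b0 b1 c u) * c u) < 0).
  { intro u. specialize (Hkt (h_star b0 b1 c u)). specialize (Hcpos u).
    assert (0 < / ktilde k (h_star b0 b1 c u)) by (apply Rinv_0_lt_compat; auto). nra. }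
  assert (HJ := jac_eq eps k b0 b1 c Hk Hk0 Hk'0 Hb0 Hb1 Hc Hcpos HD).
  assert (HP := P_desc eps k b0 b1 c Heps Hkt Hcpos HD).
  assert (Heq : forall u, equilibrium (fun y => ftilde eps k b0 b1 c y (a_star b0 b1 c u)) (u, h_star b0 b1 c u)).
  { intro u. unfold equilibrium. apply HP. split; reflexivity. }
  split. { apply ast_smooth; auto. }
  split. { apply E3; auto. }
  split. { exact HP. }
  split. { destruct (Hinf 0 (Rle_refl 0)) as [Hp Hm]. apply stab_ex; auto. }
  split.
  { intros u Hu. split; [apply Heq|]. eexists. split; [apply HJ|].
    intros z Hz. apply eig_tri in Hz as [Him [Hre|Hre]]; split; auto; rewrite Hre; auto. }
  split.
  { intros u Hu. split; [apply Heq|]. eexists. split; [apply HJ|].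
    exists (- (/ ktilde k (h_star b0 b1 c u) * c u)).
    exists (eps * (Derive (a_star b0 b1 c) u * Dd b1 c u / c u)).
    split; [split; [apply Hm22| apply Hm11'; auto]|].
    split; [apply eig_tri_s|apply eig_tri_p]. }
  split.
  { intros u H0. split.
    - split; [apply Heq|].
      destruct (Hcrit (a_star b0 b1 c u)) as [l Hl].
      destruct (list_isolated l u) as [d [Hd Hiso]].
      exists d. split; auto. intros [y1 y2] Hy1 Hy2 Hy. simpl in Hy1, Hy2.
      unfold equilibrium in Hy. apply HP in Hy as [Ea En].
      assert (Hin : In y1 l). { apply Hl. rewrite Ea. apply E3; auto. }
      destruct (Req_dec y1 u) as [E|E].
      + subst y1. subst y2. reflexivity.
      + exfalso. specialize (Hiso y1 Hin E). lra.
    - split; [apply Heq|]. eexists. split; [apply HJ|].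
      eexists. split; [apply eig_tri_p|]. simpl. rewrite H0. unfold Rdiv. ring. }
  intros u H0 H2. apply fold_lemma; auto.
Qed.
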